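(* There exist a function $g:\mathbb{N}\to\mathbb{R}$ with $g(n)=o(n)$ and, for every $n\ge 1$, an injective map from the set of AVL trees with $n$ nodes to the set of finite binary strings such that every codeword has length at most $0.99933\,n+g(n)$. In words: there is a static encoding of AVL trees using at most $0.99933n+o(n)$ bits for AVL trees with $n$ nodes.
   Context: A binary tree is a rooted tree in which every node has an (optional) left child and an (optional) right child. The height of a tree is the number of edges on a longest path from the root to a leaf; the empty tree has height $-1$. An AVL tree is a binary tree such that at every node the heights of the left subtree and the right subtree differ by at most $1$ (empty subtrees included). *)

(* Defs.v *)
From Stdlib Require Import Reals ZArith List.

Inductive btree : Type :=
| Leaf : btree
| Node : btree -> btree -> btree.

Fixpoint nodes (t : btree) : nat :=
  match t with
  | Leaf => 0
  | Node l r => S (nodes l + nodes r)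
  end.

Fixpoint height (t : btree) : Z :=
  match t with
  | Leaf => (-1)%Z
  | Node l r => (1 + Z.max (height l) (height r))%Z
  end.

Fixpoint is_avl (t : btree) : Prop :=
  match t with
  | Leaf => True
  | Node l r => is_avl l /\ is_avl r /\ (Z.abs (height l - height r) <= 1)%Z
  end.

Definition little_o_n (g : nat -> R) : Prop :=
  forall eps : R, (0 < eps)%R ->
    exists N : nat, forall n : nat, (N <= n)%nat -> (Rabs (g n) <= eps * INR n)%R.

(* Main.v *)
Require Import Defs.
From Stdlib Require Import Reals ZArith List Lra Lia.

Definition prodN (A B : list btree) : list btree :=
  flat_map (fun l => map (fun r => Node l r) B) A.

Fixpoint L (k : nat) : list btree :=
  match k with
  | 0 => nil
  | S k' => match k' with
     | 0 => Leaf :: nil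
     | S j => prodN (L k') (L k') ++ prodN (L k') (L j) ++ prodN (L j) (L k')
     end
  end.

Lemma L_SS j : L (S (S j)) = prodN (L (S j)) (L (S j)) ++ prodN (L (S j)) (L j) ++ prodN (L j) (L (S j)).
Proof. reflexivity. Qed.

Lemma in_prodN A B l r : In l A -> In r B -> In (Node l r) (prodN A B).
Proof.
  intros. unfold prodN. apply in_flat_map. exists l. split; auto.
  apply in_map. auto.
Qed.

Lemma height_ge t : (-1 <= height t)%Z.
Proof. induction t; cbn [height nodes]; lia. Qed.

Lemma height_nodes t : (height t + 1 <= Z.of_nat (nodes t))%Z.
Proof. induction t; cbn [height nodes]; lia. Qed.

Lemma avl_in_L t : is_avl t -> In t (L (Z.to_nat (height t + 2))).
Proof.
  induction t as [|l IHl r IHr]; cbn [height is_avl].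
  - intros _. left; reflexivity.
  - intros [Hl [Hr Hd]].
    specialize (IHl Hl). specialize (IHr Hr).
    pose proof (height_ge l). pose proof (height_ge r).
    set (j := Z.to_nat (height l + 1)) in *.
    assert (height l = height r \/ height l = height r + 1 \/ height r = height l + 1)%Z
      as [E|[E|E]] by lia.
    + replace (Z.to_nat (1 + Z.max (height l) (height r) + 2)) with (S (S j)) by lia.
      replace (Z.to_nat (height l + 2)) with (S j) in IHl by lia.
      replace (Z.to_nat (height r + 2)) with (S j) in IHr by lia.
      rewrite L_SS. apply in_or_app. left. apply in_prodN; auto.
    + replace (Z.to_nat (1 + Z.max (height l) (height r) + 2)) with (S (S j)) by lia.
      replace (Z.to_nat (height l + 2)) with (S j) in IHl by lia.
      replace (Z.to_nat (height r + 2)) with j in IHr by lia.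
      rewrite L_SS. apply in_or_app. right. apply in_or_app. left. apply in_prodN; auto.
    + set (k := Z.to_nat (height r + 1)) in *.
      replace (Z.to_nat (1 + Z.max (height l) (height r) + 2)) with (S (S k)) by lia.
      replace (Z.to_nat (height l + 2)) with k in IHl by lia.
      replace (Z.to_nat (height r + 2)) with (S k) in IHr by lia.
      rewrite L_SS. apply in_or_app. right. apply in_or_app. right. apply in_prodN; auto.
Qed.

Definition Fl (n : nat) : list btree :=
  filter (fun t => Nat.eqb (nodes t) n) (flat_map L (seq 0 (n + 2))).

Lemma avl_in_F t n : is_avl t -> nodes t = n -> In t (Fl n).
Proof.
  intros Ha Hn. unfold Fl. apply filter_In. split.
  - apply in_flat_map. exists (Z.to_nat (height t + 2)). split.
    + apply in_seq. pose proof (height_ge t). pose proof (height_nodes t). lia.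
    + apply avl_in_L; auto.
  - apply Nat.eqb_eq; auto.
Qed.

Definition btree_eq_dec : forall a b : btree, {a = b} + {a <> b}.
Proof. decide equality. Defined.

Fixpoint idx (t : btree) (l : list btree) : nat :=
  match l with
  | nil => 0
  | a :: l' => if btree_eq_dec t a then 0 else S (idx t l')
  end.

Lemma idx_spec t l : In t l -> idx t l < length l /\ nth (idx t l) l Leaf = t.
Proof.
  induction l as [|a l IH]; simpl; [tauto|].
  intros H. destruct (btree_eq_dec t a).
  - subst. split; [lia|reflexivity].
  - destruct H as [H|H]; [congruence|]. destruct (IH H). split; [lia|auto].
Qed.

Fixpoint bits (m i : nat) : list bool :=
  match m with
  | 0 => nil
  | S m' => Nat.odd i :: bits m' (Nat.div2 i)
  end.

Lemma bits_length m i : length (bits m i) = m.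
Proof. revert i; induction m; simpl; auto. Qed.

Lemma bits_inj m : forall i j, i < 2 ^ m -> j < 2 ^ m -> bits m i = bits m j -> i = j.
Proof.
  induction m as [|m IH]; simpl; intros i j Hi Hj E.
  - lia.
  - injection E as E1 E2.
    pose proof (Nat.div2_odd i) as Di. pose proof (Nat.div2_odd j) as Dj.
    assert (Nat.b2n (Nat.odd i) <= 1) by (destruct (Nat.odd i); simpl; lia).
    assert (Nat.b2n (Nat.odd j) <= 1) by (destruct (Nat.odd j); simpl; lia).
    assert (Nat.div2 i = Nat.div2 j) as E3 by (apply IH; auto; lia).
    rewrite Di, Dj, E1, E3. reflexivity.
Qed.
Open Scope R_scope.

Definition x : R := 20/39.

Fixpoint W (l : list btree) : R :=
  match l with nil => 0 | t :: l' => x ^ (nodes t) + W l' end.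

Lemma W_app a b : W (a ++ b) = W a + W b.
Proof. induction a; simpl; [lra|rewrite IHa; lra]. Qed.

Lemma W_nonneg l : 0 <= W l.
Proof. induction l; simpl; [lra|]. assert (0 <= x ^ nodes a) by (apply pow_le; unfold x; lra). lra. Qed.

Lemma W_map_node l B : W (map (fun r => Node l r) B) = x * x ^ (nodes l) * W B.
Proof.
  induction B; simpl; [ring|]. rewrite IHB, pow_add. ring.
Qed.

Lemma W_prodN A B : W (prodN A B) = x * W A * W B.
Proof.
  induction A; unfold prodN in *; simpl; [ring|].
  rewrite W_app, W_map_node, IHA. ring.
Qed.

Lemma W_filter_le f l : W (filter f l) <= W l.
Proof.
  induction l; simpl; [lra|].
  assert (0 <= x ^ nodes a) by (apply pow_le; unfold x; lra).
  destruct (f a); simpl; lra.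
Qed.

Lemma W_filter_eq n l :
  W (filter (fun t => Nat.eqb (nodes t) n) l) = INR (length (filter (fun t => Nat.eqb (nodes t) n) l)) * x ^ n.
Proof.
  induction l; cbn [filter W length]; [simpl; ring|].
  destruct (Nat.eqb_spec (nodes a) n); cbn [W length]; [|auto].
  rewrite IHl, S_INR, e. ring.
Qed.

Definition Sv k := W (L k).

Fixpoint Ssum m := match m with 0 => 0 | S m' => Ssum m' + Sv m' end.

Lemma W_flat m : W (flat_map L (seq 0 m)) = Ssum m.
Proof.
  induction m; [reflexivity|]. cbn [Ssum].
  rewrite seq_S, flat_map_app, W_app, IHm. simpl. rewrite app_nil_r. reflexivity.
Qed.

Lemma Sv_nonneg k : 0 <= Sv k.
Proof. apply W_nonneg. Qed.

Lemma Sv_SS j : Sv (S (S j)) = x * (Sv (S j) * Sv (S j) + 2 * Sv (S j) * Sv j).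
Proof.
  unfold Sv. rewrite L_SS, !W_app, !W_prodN. ring.
Qed.

Lemma Sv_step j a b : Sv j <= a -> Sv (S j) <= b ->
  Sv (S (S j)) <= x * (b * b + 2 * b * a).
Proof.
  intros Ha Hb. rewrite Sv_SS.
  pose proof (Sv_nonneg j). pose proof (Sv_nonneg (S j)).
  assert (Sv (S j) * Sv (S j) <= b * b) by (apply Rmult_le_compat; lra).
  assert (Sv (S j) * Sv j <= b * a) by (apply Rmult_le_compat; lra).
  unfold x in *. lra.
Qed.

Lemma Sv0 : Sv 0 = 0. Proof. reflexivity. Qed.
Lemma Sv1 : Sv 1 = 1. Proof. unfold Sv; simpl. ring. Qed.
Lemma Sv2 : Sv 2 = x. Proof. rewrite Sv_SS, Sv1, Sv0. ring. Qed.
Lemma Sv3 : Sv 3 <= 661/1000.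
Proof. eapply Rle_trans; [apply (Sv_step 1 1 x); rewrite ?Sv1, ?Sv2; lra|unfold x; lra]. Qed.
Lemma Sv4 : Sv 4 <= 572/1000.
Proof. eapply Rle_trans; [apply (Sv_step 2 x (661/1000)); [rewrite Sv2; lra|apply Sv3]|unfold x; lra]. Qed.
Lemma Sv5 : Sv 5 <= 556/1000.
Proof. eapply Rle_trans; [apply (Sv_step 3 (661/1000) (572/1000)); [apply Sv3|apply Sv4]|unfold x; lra]. Qed.
Lemma Sv6 : Sv 6 <= 485/1000.
Proof. eapply Rle_trans; [apply (Sv_step 4 (572/1000) (556/1000)); [apply Sv4|apply Sv5]|unfold x; lra]. Qed.

Definition C := 56/100.
Definition q := 9/10.

Lemma geom j : Sv (j + 5) <= C * q ^ j /\ Sv (S (j + 5)) <= C * q ^ (S j).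
Proof.
  induction j as [|j [IH1 IH2]].
  - simpl. pose proof Sv5. pose proof Sv6. unfold C, q. lra.
  - split; [exact IH2|].
    replace (S (S j + 5)) with (S (S (j + 5))) by lia.
    eapply Rle_trans; [apply (Sv_step _ _ _ IH1 IH2)|].
    assert (0 < q ^ j) by (apply pow_lt; unfold q; lra).
    assert (q ^ j <= 1) by (rewrite <- (pow1 j); apply pow_incr; unfold q; lra).
    set (u := q ^ j) in *. cbn [pow]. fold u.
    assert (u * u <= u) by nra.
    unfold x, C, q in *. nra.
Qed.

Lemma Ssum_mono m k : Ssum m <= Ssum (k + m).
Proof. induction k; simpl; [lra|]. pose proof (Sv_nonneg (k + m)). lra. Qed.

Lemma Ssum_S m : Ssum (S m) = Ssum m + Sv m.
Proof. reflexivity. Qed.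

Lemma Ssum_tail m : Ssum (m + 5) <= Ssum 5 + 56/10 * (1 - q ^ m).
Proof.
  induction m.
  - simpl pow. replace (0 + 5)%nat with 5%nat by reflexivity. lra.
  - replace (S m + 5)%nat with (S (m + 5)) by lia. rewrite Ssum_S. cbn [pow].
    destruct (geom m) as [H _]. unfold C, q in *. lra.
Qed.

Lemma Ssum_bound m : Ssum m <= 16.
Proof.
  eapply Rle_trans; [apply (Ssum_mono m 5)|].
  rewrite Nat.add_comm. eapply Rle_trans; [apply Ssum_tail|].
  assert (0 < q ^ m) by (apply pow_lt; unfold q; lra).
  assert (Ssum 5 = Sv 0 + Sv 1 + Sv 2 + Sv 3 + Sv 4) by (simpl; ring).
  pose proof Sv3. pose proof Sv4. rewrite Sv0, Sv1, Sv2 in *. unfold x in *. lra.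
Qed.
Open Scope R_scope.

Definition beta : R := 39/20.

Lemma beta100 : beta ^ 100 <= 2 ^ 99.
Proof.
  assert (E : beta ^ 100 * 20 ^ 100 = 39 ^ 100).
  { rewrite <- Rpow_mult_distr. unfold beta. f_equal. field. }
  assert (H : 39 ^ 100 <= 2 ^ 99 * 20 ^ 100).
  { rewrite !pow_IZR, <- mult_IZR. apply IZR_le. vm_compute. discriminate. }
  assert (P : 0 < 20 ^ 100) by (apply pow_lt; lra).
  apply (Rmult_le_reg_r (20 ^ 100)); lra.
Qed.

Lemma beta_pow n : beta ^ n <= 2 ^ 99 * 2 ^ (99 * (n / 100)).
Proof.
  rewrite (Nat.div_mod n 100) at 1 by lia.
  rewrite pow_add, pow_mult, (pow_mult 2).
  assert (Hr : (n mod 100 < 100)%nat) by (apply Nat.mod_upper_bound; lia).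
  assert (A : beta ^ (n mod 100) <= 2 ^ 99).
  { eapply Rle_trans. apply pow_incr with (y := 2). unfold beta; lra.
    apply Rle_pow; [lra|lia]. }
  assert (B : (beta ^ 100) ^ (n / 100) <= (2 ^ 99) ^ (n / 100)).
  { apply pow_incr. split; [apply pow_le; unfold beta; lra|apply beta100]. }
  assert (0 <= beta ^ (n mod 100)) by (apply pow_le; unfold beta; lra).
  assert (0 <= (beta ^ 100) ^ (n / 100)) by (apply pow_le; apply pow_le; unfold beta; lra).
  assert (0 <= (2 ^ 99) ^ (n / 100)) by (apply pow_le; apply pow_le; lra).
  rewrite (Rmult_comm (2 ^ 99)). apply Rmult_le_compat; lra.
Qed.

Lemma count_bound n : (length (Fl n) <= 2 ^ (103 + 99 * (n / 100)))%nat.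
Proof.
  apply INR_le. rewrite pow_INR. replace (INR 2) with 2 by (simpl; lra).
  assert (H1 : INR (length (Fl n)) * x ^ n <= 16).
  { unfold Fl. rewrite <- W_filter_eq. eapply Rle_trans; [apply W_filter_le|].
    rewrite W_flat. apply Ssum_bound. }
  assert (E : x ^ n * beta ^ n = 1).
  { rewrite <- Rpow_mult_distr. replace (x * beta) with 1 by (unfold x, beta; field). apply pow1. }
  assert (H2 : INR (length (Fl n)) <= 16 * beta ^ n).
  { assert (0 <= beta ^ n) by (apply pow_le; unfold beta; lra).
    replace (INR (length (Fl n))) with (INR (length (Fl n)) * x ^ n * beta ^ n)
      by (rewrite Rmult_assoc, E; ring).
    apply Rmult_le_compat_r; lra. }
  pose proof (beta_pow n).
  rewrite !pow_add. replace (2 ^ 103) with (16 * 2 ^ 99).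
  2:{ replace 103%nat with (4 + 99)%nat by reflexivity. rewrite pow_add. simpl; ring. }
  lra.
Qed.
Close Scope R_scope.

Theorem theorem1 :
  exists g : nat -> R,
    little_o_n g /\
    forall n : nat, (1 <= n)%nat ->
      exists enc : btree -> list bool,
        (forall t1 t2 : btree,
            is_avl t1 -> is_avl t2 -> nodes t1 = n -> nodes t2 = n ->
            enc t1 = enc t2 -> t1 = t2) /\
        (forall t : btree, is_avl t -> nodes t = n ->
            (INR (length (enc t)) <= 99933 / 100000 * INR n + g n)%R).
Proof.
  exists (fun _ => 103%R). split.
  - intros eps Heps. destruct (INR_unbounded (103 / eps)) as [N HN].
    exists N. intros n Hn. rewrite Rabs_pos_eq by lra.
    apply le_INR in Hn.
    assert (103 <= eps * INR N)%R.
    { apply (Rmult_le_reg_l (/ eps)). apply Rinv_0_lt_compat; lra.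
      rewrite <- Rmult_assoc, Rinv_l by lra. unfold Rdiv in HN. lra. }
    assert (eps * INR N <= eps * INR n)%R by (apply Rmult_le_compat_l; lra).
    lra.
  - intros n _. exists (fun t => bits (103 + 99 * (n / 100)) (idx t (Fl n))). split.
    + intros t1 t2 A1 A2 N1 N2 E.
      destruct (idx_spec t1 (Fl n) (avl_in_F t1 n A1 N1)) as [B1 E1].
      destruct (idx_spec t2 (Fl n) (avl_in_F t2 n A2 N2)) as [B2 E2].
      pose proof (count_bound n).
      apply bits_inj in E; try lia.
      rewrite <- E1, <- E2, E. reflexivity.
    + intros t _ _. rewrite bits_length.
      rewrite plus_INR, mult_INR.
      assert (H : (100 * (n / 100) <= n)%nat) by (apply Nat.Div0.mul_div_le; lia).
      apply le_INR in H. rewrite mult_INR in H.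
      pose proof (pos_INR n). simpl (INR 99) in *. simpl (INR 100) in *. simpl (INR 103).
      lra.
Qed.
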